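(* Fix a prime $p$ and define $\mathbb{L}_p:\mathbb{Z}[\tfrac1p]\to[0,\infty)$ by $\mathbb{L}_p(r)=|r|+\|r\|_p$. Then $\mathbb{L}_p$ is a length function on the group $\mathbb{Z}[\tfrac1p]$ which is proper and unbounded.
   Context: $\mathbb{Z}[\tfrac1p]=\{a/p^k: a\in\mathbb{Z},k\in\mathbb{N}\}\subset\mathbb{Q}$, viewed as a discrete abelian group under addition; $|r|$ is the usual absolute value. The $p$-adic norm on $\mathbb{Q}$ is $\|0\|_p=0$ and $\|r\|_p=p^{-n}$ if $r=\frac{ap^n}{b}$ with $a,n\in\mathbb{Z}$, $b\in\mathbb{Z}\setminus\{0\}$, $\gcd(a,p)=\gcd(b,p)=\gcd(a,b)=1$. A length function on a discrete group $\Gamma$ is a map $\mathbb{L}:\Gamma\to[0,\infty)$ with $\mathbb{L}(\gamma)=0$ iff $\gamma=e$, $\mathbb{L}(\gamma^{-1})=\mathbb{L}(\gamma)$, and $\mathbb{L}(\gamma_1\gamma_2)\le\mathbb{L}(\gamma_1)+\mathbb{L}(\gamma_2)$. It is proper if $B_{\mathbb{L}}(R)=\{\gamma\in\Gamma:\mathbb{L}(\gamma)\le R\}$ is finite for every $0\le R<\infty$. *)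

(* Defs.v *)
From HB Require Import structures.
From mathcomp Require Import all_boot all_order all_algebra.
Set Implicit Arguments. Unset Strict Implicit. Unset Printing Implicit Defensive.
Import Order.TTheory GRing.Theory Num.Theory.
Local Open Scope ring_scope.

Definition Zinvp (p : nat) (r : rat) : Prop :=
  exists (a : int) (k : nat), r = a%:~R / (p%:R ^+ k).

(* p-adic norm on Q: ||0||_p = 0 and ||r||_p = p^(-n) where
   r = a p^n / b with a, b coprime to p.  With r = numq r / denq r in lowest
   terms, n = v_p(numq r) - v_p(denq r). *)
Definition padic_val (p : nat) (r : rat) : int :=
  (logn p `|numq r|%N)%:Z - (logn p `|denq r|%N)%:Z.

Definition padic_norm (p : nat) (r : rat) : rat :=
  if r == 0 then 0 else (p%:R : rat) ^ (- padic_val p r).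

Definition Lp (p : nat) (r : rat) : rat := `|r| + padic_norm p r.

Definition is_length_function (S : rat -> Prop) (L : rat -> rat) : Prop :=
  [/\ (forall r, S r -> 0 <= L r),
      (forall r, S r -> (L r = 0 <-> r = 0)),
      (forall r, S r -> L (- r) = L r)
    & (forall r s, S r -> S s -> L (r + s) <= L r + L s)].

Definition is_proper_length (S : rat -> Prop) (L : rat -> rat) : Prop :=
  forall R : rat, 0 <= R ->
    exists s : seq rat, forall r, S r -> L r <= R -> r \in s.

Definition is_unbounded (S : rat -> Prop) (L : rat -> rat) : Prop :=
  forall R : rat, exists r, S r /\ R < L r.

(* Main.v *)
Require Import Defs.
From mathcomp Require Import all_boot all_order all_algebra.
From mathcomp Require Import zify ring lra.
Import Order.TTheory GRing.Theory Num.Theory.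
Local Open Scope ring_scope.

Lemma nat_intr (n : nat) : (n%:Z)%:~R = n%:R :> rat.
Proof. by rewrite -pmulrn. Qed.

Lemma pR0 {p : nat} : prime p -> (p%:R : rat) != 0.
Proof. by move=> pp; rewrite pnatr_eq0 -lt0n prime_gt0. Qed.

Lemma val_frac {p : nat} (r : rat) (a : int) (m n : nat) : prime p ->
  a != 0 -> ~~ (p %| `|a|)%N -> r * p%:R ^+ m = a%:~R * p%:R ^+ n ->
  padic_val p r = n%:Z - m%:Z.
Proof.
move=> pp a0 pa e.
have p0 : (0 < p)%N := prime_gt0 pp.
have pR := pR0 pp.
have r0 : r != 0.
  apply/negP => /eqP r0; move: e; rewrite r0 mul0r => /esym/eqP.
  by rewrite mulf_eq0 intr_eq0 (negbTE a0) /= expf_eq0 (negbTE pR) andbF.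
have d0 : (denq r)%:~R != 0 :> rat by rewrite intr_eq0 denq_neq0.
have ei : numq r * (p ^ m)%N%:Z = a * (p ^ n)%N%:Z * denq r.
  apply: (@intr_inj rat); rewrite !intrM !nat_intr !natrX.
  move: e; rewrite -{1}(divq_num_den r) => e.
  by rewrite -e mulrAC divfK.
have := congr1 absz ei; rewrite !abszM !absz_nat => en.
have nq0 : (0 < `|numq r|)%N by rewrite absz_gt0 numq_eq0.
have dq0 : (0 < `|denq r|)%N by rewrite absz_gt0 denq_neq0.
have pm0 : forall k, (0 < p ^ k)%N by move=> k; rewrite expn_gt0 p0.
have a0' : (0 < `|a|)%N by rewrite absz_gt0.
have := congr1 (logn p) en.
rewrite lognM // lognM ?muln_gt0 ?a0' ?pm0 // lognM // !pfactorK //.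
rewrite (logn_coprime (m:=`|a|)) ?prime_coprime // => h.
rewrite /padic_val; lia.
Qed.

Lemma norm_nf {p : nat} {r a z} : prime p -> a != 0 -> ~~ (p %| `|a|)%N ->
  r = a%:~R * p%:R ^ z -> padic_norm p r = p%:R ^ (-z).
Proof.
move=> pp a0 pa rE.
have pR := pR0 pp.
have r0 : r != 0 by rewrite rE mulf_neq0 ?intr_eq0 // expfz_neq0.
rewrite /padic_norm (negbTE r0); congr (_ ^ _).
case: z rE => n rE.
- rewrite (@val_frac p r a 0%N n) //; first lia.
  by rewrite rE expr0 mulr1.
- rewrite (@val_frac p r a n.+1 0%N) //; first by rewrite NegzE; lia.
  by rewrite rE /= mulfVK ?expf_neq0 // expr0 mulr1.
Qed.

Lemma int_nf {p : nat} {e : int} : prime p -> e != 0 -> exists e' j,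
  [/\ e' != 0, ~~ (p %| `|e'|)%N & e = e' * (p ^ j)%N%:Z].
Proof.
move=> pp e0.
have e0' : (0 < `|e|)%N by rewrite absz_gt0.
have [m cm hm] := pfactor_coprime pp e0'.
exists ((-1) ^+ (e < 0)%R * m%:Z), (logn p `|e|).
rewrite abszMsign absz_nat -prime_coprime //; split => //.
- rewrite mulf_neq0 ?signr_eq0 //; apply/eqP => m0; move: m0 hm => [->].
  by rewrite mul0n => /eqP; rewrite absz_eq0 (negbTE e0).
- by rewrite -mulrA -PoszM -hm; exact: intEsign.
Qed.

Lemma S_nf {p : nat} {r} : prime p -> Zinvp p r -> r != 0 -> exists a z,
  [/\ a != 0, ~~ (p %| `|a|)%N & r = a%:~R * p%:R ^ z].
Proof.
move=> pp [a [k ->]] r0.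
have pR := pR0 pp.
have a0 : a != 0 by apply/eqP => a0; move: r0; rewrite a0 mul0r eqxx.
have [e' [j [e0 pe ae]]] := int_nf pp a0.
exists e', (j%:Z - k%:Z); split => //.
rewrite ae intrM nat_intr natrX expfzDr // exprnN -mulrA.
by [].
Qed.

Lemma padic_norm_ge0 p r : 0 <= padic_norm p r.
Proof. by rewrite /padic_norm; case: ifP => _ //; apply: exprz_ge0; rewrite ler0n. Qed.

Lemma padic_norm0 p : padic_norm p 0 = 0.
Proof. by rewrite /padic_norm eqxx. Qed.

Lemma claim {p : nat} {r s a c z w} : prime p ->
  a != 0 -> ~~ (p %| `|a|)%N -> r = a%:~R * p%:R ^ z ->
  c != 0 -> ~~ (p %| `|c|)%N -> s = c%:~R * p%:R ^ w ->
  z <= w -> padic_norm p (r + s) <= p%:R ^ (- z).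
Proof.
move=> pp a0 pa rE c0 pc sE zw.
have pR := pR0 pp.
have p1 : 1 <= (p%:R : rat) by rewrite ler1n prime_gt0.
set d := `|w - z|%N.
have wE : w = d%:Z + z by rewrite /d gez0_abs ?subr_ge0 // subrK.
have sumE : r + s = (a + c * (p ^ d)%N%:Z)%:~R * p%:R ^ z.
  by rewrite rE sE wE expfzDr // intrD intrM nat_intr natrX mulrDl mulrA.
have [e0|e0] := eqVneq (a + c * (p ^ d)%N%:Z) 0.
  rewrite sumE e0 mul0r padic_norm0; apply: exprz_ge0; lra.
have [e' [j [e'0 pe ee]]] := int_nf pp e0.
rewrite (@norm_nf p _ e' (j%:Z + z)) //.
  apply: ler_weXz2l => //; lia.
by rewrite sumE ee intrM nat_intr natrX expfzDr // mulrA.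
Qed.

Lemma ultra {p : nat} {r s} : prime p -> Zinvp p r -> Zinvp p s ->
  padic_norm p (r + s) <= padic_norm p r + padic_norm p s.
Proof.
move=> pp Sr Ss.
have [->|r0] := eqVneq r 0; first by rewrite add0r padic_norm0 add0r.
have [->|s0] := eqVneq s 0; first by rewrite addr0 padic_norm0 addr0.
have [a [z [a0 pa rE]]] := S_nf pp Sr r0.
have [c [w [c0 pc sE]]] := S_nf pp Ss s0.
rewrite (norm_nf pp a0 pa rE) (norm_nf pp c0 pc sE).
have g1 : 0 <= (p%:R : rat) ^ (- z) by apply: exprz_ge0; rewrite ler0n.
have g2 : 0 <= (p%:R : rat) ^ (- w) by apply: exprz_ge0; rewrite ler0n.
have [zw|wz] := lerP z w.
  have := claim pp a0 pa rE c0 pc sE zw; lra.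
have := claim pp c0 pc sE a0 pa rE (ltW wz); rewrite addrC; lra.
Qed.

Theorem lemma3p4 (p : nat) : prime p ->
  [/\ is_length_function (Zinvp p) (Lp p),
      is_proper_length (Zinvp p) (Lp p)
    & is_unbounded (Zinvp p) (Lp p)].
Proof.
move=> pp.
have pR := pR0 pp.
have p0 : (0 < p)%N := prime_gt0 pp.
split.
- split.
  + by move=> r _; rewrite /Lp addr_ge0 ?normr_ge0 ?padic_norm_ge0.
  + move=> r _; split; last by move=> ->; rewrite /Lp padic_norm0 normr0 addr0.
    move=> h; have [//|r0] := eqVneq r 0; exfalso.
    have := padic_norm_ge0 p r; have : 0 < `|r| by rewrite normr_gt0.
    move: h; rewrite /Lp; lra.
  + move=> r _; rewrite /Lp normrN /padic_norm oppr_eq0 /padic_val.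
    by rewrite numqN denqN abszN.
  + move=> r s Sr Ss; rewrite /Lp.
    have := ultra pp Sr Ss; have := ler_normD r s; lra.
- move=> R R0.
  set N := Num.Def.archi_bound R.
  have RN : R < N%:R by apply: archi_boundP.
  set M := (N * p ^ N)%N.
  set ints := [seq (i%:Z - M%:Z) | i <- iota 0 (M.*2.+1)].
  exists [seq a%:~R / ((p%:R : rat) ^+ k) | k <- iota 0 N.+1, a <- ints].
  have mem_s : forall k a, (k <= N)%N -> (`|a| <= M)%N ->
      a%:~R / ((p%:R : rat) ^+ k) \in
      [seq a%:~R / ((p%:R : rat) ^+ k) | k <- iota 0 N.+1, a <- ints].
    move=> k a kN aM; apply: (allpairs_f (fun k (a : int) => a%:~R / ((p%:R : rat) ^+ k))); first by rewrite mem_iota; lia.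
    apply/mapP; exists `|(a + M%:Z)%R|%N; first by rewrite mem_iota; lia.
    lia.
  move=> r Sr Lr.
  have [->|r0] := eqVneq r 0.
    by have := mem_s 0%N 0 (leq0n _) (leq0n _); rewrite mul0r.
  have [a [z [a0 pa rE]]] := S_nf pp Sr r0.
  move: Lr; rewrite /Lp (norm_nf pp a0 pa rE) => Lr.
  have nrR : `|r| < N%:R.
    have : 0 <= (p%:R : rat) ^ (- z) by apply: exprz_ge0; rewrite ler0n.
    lra.
  have pNge : (1 <= p ^ N)%N by rewrite expn_gt0 p0.
  case: z rE Lr => n rE Lr.
  + have -> : r = (a * (p ^ n)%N%:Z)%:~R / ((p%:R : rat) ^+ 0).
      by rewrite expr0 divr1 intrM nat_intr natrX rE.
    apply: mem_s => //.
    have h : `|(a * (p ^ n)%N%:Z)| < N%:Z.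
      rewrite -(ltr_int rat) intr_norm intrM !nat_intr natrX.
      by move: nrR; rewrite rE.
    rewrite /M; nia.
  + have rE' : r = a%:~R / ((p%:R : rat) ^+ n.+1) by rewrite rE.
    rewrite rE'.
    have pk : (p ^ n.+1)%:R <= R.
      have : 0 <= `|r| by apply: normr_ge0.
      move: Lr; rewrite natrX NegzE opprK => h1 h2; apply: le_trans h1.
      by rewrite -[X in X <= _]add0r; apply: lerD.
    have pkN : (p ^ n.+1 < N)%N.
      by rewrite -(ltr_nat rat); apply: le_lt_trans RN.
    have kN : (n.+1 <= N)%N.
      have := ltn_expl n.+1 (prime_gt1 pp); lia.
    apply: mem_s => //.
    have aE : `|a|%:~R = `|r| * (p ^ n.+1)%:R :> rat.
      rewrite rE' intr_norm normrM normfV normrX normr_nat natrX.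
      by rewrite mulfVK // expf_neq0.
    have h : `|a|%:~R <= (N * p ^ N)%N%:R :> rat.
      rewrite aE natrM; apply: ler_pM => //.
      - exact: ltW.
      - by rewrite ler_nat leq_pexp2l.
    move: h; rewrite -nat_intr ler_int /M; lia.
- move=> R.
  set N := Num.Def.archi_bound `|R|.
  have RN : `|R| < N%:R by apply: archi_boundP.
  exists (N%:R); split.
    by exists N%:Z, 0%N; rewrite expr0 divr1 nat_intr.
  rewrite /Lp normr_nat.
  have := padic_norm_ge0 p N%:R; have := ler_norm R; lra.
Qed.
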